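(* Let $A=\sigma(R)\langle x_1,\dots,x_n\rangle$ be a $\sigma$-PBW extension such that $c_{\alpha,\beta}$ is invertible for all $\alpha,\beta\in\mathbb N^n$. Let $\mathbf f,\mathbf h\in A^m$, let $\theta\in\mathbb N^n$, and let $F=\{\mathbf f_1,\dots,\mathbf f_t\}$ be a finite set of nonzero vectors of $A^m$. Then: (i) If $\mathbf f\xrightarrow{F}\mathbf h$, then there exists $\mathbf p\in A^m$ with $\mathbf p=\mathbf 0$ or $lm(x^\theta\mathbf f)\succ lm(\mathbf p)$ such that $x^\theta\mathbf f+\mathbf p\xrightarrow{F}x^\theta\mathbf h$. If $A$ is quasi-commutative, one can take $\mathbf p=\mathbf 0$. (ii) If $\mathbf f\xrightarrow{F}_+\mathbf h$ and $\mathbf p\in A^m$ satisfies $\mathbf p=\mathbf 0$ or $lm(\mathbf h)\succ lm(\mathbf p)$, then $\mathbf f+\mathbf p\xrightarrow{F}_+\mathbf h+\mathbf p$. (iii) If $\mathbf f\xrightarrow{F}_+\mathbf h$, then there exists $\mathbf p\in A^m$ with $\mathbf p=\mathbf 0$ or $lm(x^\theta\mathbf f)\succ lm(\mathbf p)$ such that $x^\theta\mathbf f+\mathbf p\xrightarrow{F}_+x^\theta\mathbf h$. If $A$ is quasi-commutative, one can take $\mathbf p=\mathbf 0$. (iv) If $\mathbf f\xrightarrow{F}_+\mathbf 0$, then there exists $\mathbf p\in A^m$ with $\mathbf p=\mathbf 0$ or $lm(x^\theta\mathbf f)\succ lm(\mathbf p)$ such that $x^\theta\mathbf f+\mathbf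 p\xrightarrow{F}_+\mathbf 0$. If $A$ is quasi-commutative, one can take $\mathbf p=\mathbf 0$.
   Context: Let $R\subseteq A$ be rings. $A$ is a $\sigma$-PBW extension of $R$, written $A=\sigma(R)\langle x_1,\dots,x_n\rangle$, if there are $x_1,\dots,x_n\in A\setminus R$ such that: (i) $A$ is a free left $R$-module with basis $\mathrm{Mon}(A)=\{x^\alpha=x_1^{\alpha_1}\cdots x_n^{\alpha_n}:\alpha\in\mathbb N^n\}$, with $x^0=1$; (ii) for every $i$ and every $r\in R\setminus\{0\}$ there is $c_{i,r}\in R\setminus\{0\}$ with $x_ir-c_{i,r}x_i\in R$; (iii) for all $i,j$ there is $c_{i,j}\in R\setminus\{0\}$ with $x_jx_i-c_{i,j}x_ix_j\in R+Rx_1+\dots+Rx_n$. There are injective ring endomorphisms $\sigma_i$ of $R$ and $\sigma_i$-derivations $\delta_i$ with $x_ir=\sigma_i(r)x_i+\delta_i(r)$. Write $\sigma^\alpha=\sigma_1^{\alpha_1}\circ\cdots\circ\sigma_n^{\alpha_n}$ and $|\alpha|=\sum\alpha_i$. The degree of a nonzero element of $A$ is the maximum of $|\alpha|$ over the monomials $x^\alpha$ occurring in it. For $\alpha,\beta\in\mathbb N^n$ there are unique $c_{\alpha,\beta}\in R$ (left invertible) and $p_{\alpha,\beta}\in A$ with $x^\alpha x^\beta=c_{\alpha,\beta}x^{\alpha+\beta}+p_{\alpha,\beta}$, where $p_{\alpha,\beta}=0$ or $\deg p_{\alpha,\beta}<|\alpha+\beta|$. $A$ is quasi-commutative if $x_ir=c_{i,r}x_i$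 and $x_jx_i=c_{i,j}x_ix_j$ exactly. Standing assumptions: $R$ is left Gröbner soluble (left Noetherian; membership of $a$ in a left ideal $Rr_1+\dots+Rr_m$ is decidable, with coefficients computable; and finite generating sets of $\mathrm{Syz}_R[r_1\cdots r_m]=\{(b_1,\dots,b_m)\in R^m:\sum b_ir_i=0\}$ are computable). $\mathrm{Mon}(A)$ carries a monomial order, i.e. a total order $\succeq$ with: (a) $x^\beta\succeq x^\alpha\Rightarrow lm(x^\gamma x^\beta x^\lambda)\succeq lm(x^\gamma x^\alpha x^\lambda)$; (b) $x^\alpha\succeq1$; (c) $|\beta|\ge|\alpha|\Rightarrow x^\beta\succeq x^\alpha$. $A^m$ is the free left $A$-module of column vectors with canonical basis $\mathbf e_i$. A monomial of $A^m$ is $x^\alpha\mathbf e_i$, with $\mathrm{ind}=i$, $\exp=\alpha$, $\deg=|\alpha|$. The monomial $x^\alpha\mathbf e_i$ divides $x^\beta\mathbf e_j$ iff $i=j$ and $\beta_k\ge\alpha_k$ for all $k$. $\mathrm{Mon}(A^m)$ carries a monomial order, i.e. a total order with: (i) $lm(x^\beta x^\alpha)\mathbf e_i\succeq x^\alpha\mathbf e_i$; (ii) $x^\beta\mathbf e_j\succeq x^\alpha\mathbf e_i\Rightarrow lm(x^\gamma x^\beta)\mathbf e_j\succeq lm(x^\gamma x^\alpha)\mathbf e_i$; (iii) $\deg\mathbf X\ge\deg\mathbf Y\Rightarrow\mathbf X\succeq\mathbf Y$. Writing a nonzero $\mathbf f=c_1\mathbf X_1+\dots+c_t\mathbf X_t$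 with $c_i\in R\setminus\{0\}$ and $\mathbf X_1\succ\dots\succ\mathbf X_t$, set $lm(\mathbf f)=\mathbf X_1$, $lc(\mathbf f)=c_1$, $lt(\mathbf f)=c_1\mathbf X_1$. Also $lm(\mathbf 0)=\mathbf 0$, and $\mathbf X\succ\mathbf 0$ for every monomial $\mathbf X$. Reduction. Let $F$ be a finite set of nonzero vectors of $A^m$ and $\mathbf f,\mathbf h\in A^m$. We say $\mathbf f$ reduces to $\mathbf h$ by $F$ in one step, $\mathbf f\xrightarrow{F}\mathbf h$, if there are $\mathbf f_1,\dots,\mathbf f_t\in F$ and $r_1,\dots,r_t\in R$ with: (1) $lm(\mathbf f_i)\mid lm(\mathbf f)$, i.e. $\mathrm{ind}(lm\,\mathbf f_i)=\mathrm{ind}(lm\,\mathbf f)$ and $\alpha_i+\exp(lm\,\mathbf f_i)=\exp(lm\,\mathbf f)$ for some $\alpha_i\in\mathbb N^n$; (2) $lc(\mathbf f)=\sum_i r_i\sigma^{\alpha_i}(lc(\mathbf f_i))c_{\alpha_i,\exp(lm(\mathbf f_i))}$; (3) $\mathbf h=\mathbf f-\sum_i r_ix^{\alpha_i}\mathbf f_i$. By convention $\mathbf 0\xrightarrow{F}\mathbf 0$. We write $\mathbf f\xrightarrow{F}_+\mathbf h$ if there is a finite chain $\mathbf f\xrightarrow{F}\mathbf h_1\xrightarrow{F}\cdots\xrightarrow{F}\mathbf h$ of one-step reductions. *)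

(* Defs.v *)
From HB Require Import structures.
From mathcomp Require Import all_boot all_order all_algebra.
Set Implicit Arguments. Unset Strict Implicit. Unset Printing Implicit Defensive.
Import GRing.Theory.
Local Open Scope ring_scope.

Definition exps (n : nat) := {ffun 'I_n -> nat}.
Definition exp0 (n : nat) : exps n := [ffun _ => 0%N].
Definition eunit (n : nat) (i : 'I_n) : exps n := [ffun k => nat_of_bool (k == i)].
Definition addE (n : nat) (a b : exps n) : exps n := [ffun k => (a k + b k)%N].
Definition deg (n : nat) (a : exps n) : nat := (\sum_(k < n) a k)%N.

Section PBW.
Variables (R A : nzRingType) (iota : R -> A) (n : nat) (x : 'I_n -> A)
          (coef : A -> exps n -> R) (supp : A -> seq (exps n)).

Definition xmon (a : exps n) : A := \prod_(k < n) x k ^+ a k.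

(* A is a free left R-module with basis Mon(A); [coef a alpha] is the
   coordinate of a on x^alpha and [supp a] lists its (finite) support. *)
Definition free_basis : Prop :=
  [/\ forall a al, (al \in supp a) = (coef a al != 0),
      forall a, uniq (supp a),
      forall a, a = \sum_(al <- supp a) iota (coef a al) * xmon al
    & forall (s : seq (exps n)) (c : exps n -> R), uniq s ->
        \sum_(al <- s) iota (c al) * xmon al = 0 ->
        forall al, al \in s -> c al = 0].

Definition sigma_PBW : Prop :=
  [/\ injective iota,
      free_basis,
      forall i r, x i != iota r,
      (forall i (r : R), r != 0 -> exists2 c : R, c != 0 &
          exists r' : R, x i * iota r - iota c * x i = iota r')
    & (forall i j, exists2 c : R, c != 0 &
          exists (r0 : R) (r : 'I_n -> R),
            x j * x i - iota c * x i * x j = iota r0 + \sum_(k < n) iota (r k) * x k)].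

Definition quasi_commutative : Prop :=
  (forall i (r : R), r != 0 -> exists2 c : R, c != 0 & x i * iota r = iota c * x i)
  /\ (forall i j, exists2 c : R, c != 0 & x j * x i = iota c * x i * x j).

(* sigma_i(r): the coefficient of x_i in x_i r = sigma_i(r) x_i + delta_i(r) *)
Definition sigmai (i : 'I_n) (r : R) : R := coef (x i * iota r) (eunit i).
Definition sigmaE (a : exps n) (r : R) : R :=
  foldr (fun i acc => iter (a i) (sigmai i) acc) r (enum 'I_n).
(* c_{alpha,beta}: x^alpha x^beta = c_{alpha,beta} x^{alpha+beta} + p_{alpha,beta} *)
Definition cab (a b : exps n) : R := coef (xmon a * xmon b) (addE a b).

Definition two_sided_unit (c : R) : Prop := exists u : R, u * c = 1 /\ c * u = 1.

Definition left_ideal (I : R -> Prop) : Prop :=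
  [/\ I 0, (forall a b, I a -> I b -> I (a + b)) & (forall r a, I a -> I (r * a))].
Definition left_noetherian : Prop :=
  forall I : nat -> R -> Prop, (forall k, left_ideal (I k)) ->
    (forall k a, I k a -> I k.+1 a) ->
    exists N, forall k, (N <= k)%N -> forall a, I k a <-> I N a.

(* Total orders, leading monomials (lm(0) = 0 encoded as None)             *)
Definition total_order (T : eqType) (le : rel T) : Prop :=
  [/\ reflexive le, antisymmetric le, transitive le & total le].

Definition omax (T : Type) (le : rel T) (s : seq T) : option T :=
  foldr (fun X acc => match acc with
                      | None => Some X
                      | Some Y => if le X Y then Some X else Some Y end) None s.

(* X >= Y on monomials extended by 0 (None), with X > 0 for all monomials *)
Definition geO (T : Type) (le : rel T) (o1 o2 : option T) : bool :=
  match o1, o2 with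
  | Some X, Some Y => le X Y
  | _, None => true
  | None, Some _ => false
  end.
Definition gtO (T : eqType) (le : rel T) (o1 o2 : option T) : bool :=
  match o1, o2 with
  | Some X, Some Y => le X Y && (X != Y)
  | Some _, None => true
  | None, _ => false
  end.

Definition lmA (ordA : rel (exps n)) (a : A) : option (exps n) := omax ordA (supp a).

(* monomial order on Mon(A) (condition (c) read strictly) *)
Definition monomial_order_A (ordA : rel (exps n)) : Prop :=
  [/\ total_order ordA,
      (forall a b g l, ordA b a ->
         geO ordA (lmA ordA (xmon g * xmon b * xmon l)) (lmA ordA (xmon g * xmon a * xmon l))),
      (forall a, ordA a (exp0 n))
    & (forall a b, (deg a < deg b)%N -> ordA b a && (b != a))].

(* The free module A^m (column vectors); monomials x^alpha e_i = (alpha,i) *)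
Variable m : nat.
Notation vec := 'cV[A]_m.
Notation monm := (exps n * 'I_m)%type.

Definition vsupp (f : vec) : seq monm :=
  [seq (al, i) | i <- enum 'I_m, al <- supp (f i 0)].
Definition vcoef (f : vec) (X : monm) : R := coef (f X.2 0) X.1.

Definition liftm (i : 'I_m) (o : option (exps n)) : option monm := omap (fun a => (a, i)) o.

(* monomial order on Mon(A^m) (condition (iii) read strictly) *)
Definition monomial_order_Am (ordA : rel (exps n)) (ordM : rel monm) : Prop :=
  [/\ total_order ordM,
      (forall b a i, geO ordM (liftm i (lmA ordA (xmon b * xmon a))) (Some (a, i))),
      (forall b j a i g, ordM (b, j) (a, i) ->
         geO ordM (liftm j (lmA ordA (xmon g * xmon b))) (liftm i (lmA ordA (xmon g * xmon a))))
    & (forall X Y : monm, (deg Y.1 < deg X.1)%N -> ordM X Y && (X != Y))].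

Section Reduction.
Variable ordM : rel monm.

Definition lm (f : vec) : option monm := omax ordM (vsupp f).
Definition lc (f : vec) : R := if lm f is Some X then vcoef f X else 0.

(* One-step reduction f --F--> h.  A reduction datum is a list of triples
   (f_i, alpha_i, r_i) with f_i in F. *)
Definition red1 (F : seq vec) (f h : vec) : Prop :=
  (f = 0 /\ h = 0) \/
  exists s : seq (vec * exps n * R),
    [/\ forall e, e \in s ->
          e.1.1 \in F /\
          exists (b : exps n) (i : 'I_m),
            lm e.1.1 = Some (b, i) /\ lm f = Some (addE e.1.2 b, i),
        lc f = \sum_(e <- s)
                 e.2 * sigmaE e.1.2 (lc e.1.1) *
                 (if lm e.1.1 is Some Y then cab e.1.2 Y.1 else 0)
      & h = f - \sum_(e <- s) (iota e.2 * xmon e.1.2) *: e.1.1].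

Inductive redplus (F : seq vec) : vec -> vec -> Prop :=
| redplus_one f h : red1 F f h -> redplus F f h
| redplus_step f g h : red1 F f g -> redplus F g h -> redplus F f h.

End Reduction.
End PBW.

(* Main.v *)
Require Import Defs.
From HB Require Import structures.
From mathcomp Require Import all_boot all_order all_algebra.
Set Implicit Arguments. Unset Strict Implicit. Unset Printing Implicit Defensive.
Import GRing.Theory.
Local Open Scope ring_scope.


Section Exps.
Variable n : nat.
Implicit Types a b : exps n.

Lemma addEC a b : addE a b = addE b a.
Proof. by apply/ffunP => k; rewrite !ffunE addnC. Qed.
Lemma addEA a b c : addE a (addE b c) = addE (addE a b) c.
Proof. by apply/ffunP => k; rewrite !ffunE addnA. Qed.
Lemma addE0 a : addE a (exp0 n) = a.
Proof. by apply/ffunP => k; rewrite !ffunE addn0. Qed.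
Lemma add0E a : addE (exp0 n) a = a.
Proof. by rewrite addEC addE0. Qed.
Lemma addEI a b c : addE a b = addE a c -> b = c.
Proof. by move=> /ffunP h; apply/ffunP => k; have := h k; rewrite !ffunE => /addnI. Qed.
Lemma degD a b : deg (addE a b) = (deg a + deg b)%N.
Proof. by rewrite /deg -big_split /=; apply: eq_bigr => k _; rewrite ffunE. Qed.
Lemma deg_eunit (i : 'I_n) : deg (eunit i) = 1%N.
Proof.
rewrite /deg (bigD1 i) //= ffunE eqxx big1 // => k /negbTE; by rewrite ffunE => ->.
Qed.
Lemma deg_exp0 : deg (exp0 n) = 0%N.
Proof. by rewrite /deg big1 // => k _; rewrite ffunE. Qed.
Lemma deg_eq0 a : deg a = 0%N -> a = exp0 n.
Proof.
move=> /eqP; rewrite /deg sum_nat_eq0 => /forallP h; apply/ffunP => k.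
by have := h k; rewrite ffunE /= => /eqP.
Qed.

Lemma idxE : index_enum 'I_n = enum 'I_n.
Proof. by rewrite [index_enum _]unlock enumT. Qed.

Lemma enum_split (j : 'I_n) : exists l1 l2, enum 'I_n = l1 ++ j :: l2 /\
  (forall k, k \in l1 -> (k < j)%N) /\ (forall k, k \in l2 -> (j < k)%N).
Proof.
set e := enum 'I_n.
have se : size e = n by rewrite size_enum_ord.
exists (take j e), (drop j.+1 e); split.
  by rewrite -{1}(cat_take_drop j e) (drop_nth j) ?se // nth_ord_enum.
split=> k kin.
  have : val k \in map val (take j e) by apply: map_f.
  by rewrite map_take val_enum_ord take_iota mem_iota leq_min => /andP[_ /andP[]].
have : val k \in map val (drop j.+1 e) by apply: map_f.
by rewrite map_drop val_enum_ord drop_iota mem_iota add0n => /andP[].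
Qed.

Lemma first_dec a : (0 < deg a)%N -> exists j a',
  a = addE a' (eunit j) /\ (forall k : 'I_n, (k < j)%N -> a' k = 0%N) /\
  deg a' = (deg a).-1.
Proof.
move=> dpos.
have [i0 hi0] : exists i, (0 < a i)%N.
  apply/existsP; move: dpos; apply: contraLR; rewrite negb_exists => /forallP h.
  rewrite -leqNgt leqn0 /deg sum_nat_eq0; apply/forallP => k; have := h k.
  by rewrite -leqNgt leqn0.
case: (@arg_minnP _ i0 (fun k => 0 < a k)%N (fun k : 'I_n => val k) hi0) => j hj jmin.
exists j, [ffun k => (a k - (k == j))%N]; split; [|split].
- apply/ffunP => k; rewrite !ffunE; case: eqP => [->|_]; last by rewrite !subn0 addn0.
  by rewrite subnK.
- move=> k kj; rewrite ffunE; case: eqP => [ekj|_].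
    by move: kj; rewrite ekj ltnn.
  rewrite subn0; apply/eqP; rewrite -leqn0 leqNgt; apply/negP => /jmin.
  by rewrite leqNgt kj.
- have e : a = addE [ffun k => (a k - (k == j))%N] (eunit j).
    apply/ffunP => k; rewrite !ffunE; case: eqP => [->|_]; last by rewrite !subn0 addn0.
    by rewrite subnK.
  by rewrite {2}e degD deg_eunit addn1.
Qed.

End Exps.

Section XM.
Variables (A : nzRingType) (n : nat) (x : 'I_n -> A).

Lemma xmon_cons (a : exps n) (j : 'I_n) : (forall k : 'I_n, (k < j)%N -> a k = 0%N) ->
  xmon x (addE a (eunit j)) = x j * xmon x a.
Proof.
move=> h; rewrite /xmon !idxE.
have [l1 [l2 [-> [h1 h2]]]] := enum_split j.
rewrite !big_cat !big_cons /=.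
have P1 : forall F : 'I_n -> A, (forall k, k \in l1 -> F k = 1) -> \prod_(k <- l1) F k = 1.
  by move=> F hF; rewrite big_seq big1.
rewrite [X in X * _ = _]P1; last first.
  move=> k kl; rewrite !ffunE h ?h1 //.
  by case: eqP => [ekj|]; [have := h1 _ kl; rewrite ekj ltnn | rewrite addn0 expr0].
rewrite [X in _ = _ * (X * _)]P1; last by move=> k /h1 /h ->; rewrite expr0.
rewrite !mul1r !ffunE eqxx addn1 exprS -mulrA; congr (_ * (_ * _)).
apply: eq_big_seq => k kl; rewrite !ffunE.
by case: eqP => [ekj|]; [have := h2 _ kl; rewrite ekj ltnn | rewrite addn0].
Qed.

Lemma xmon0 : xmon x (exp0 n) = 1.
Proof. by rewrite /xmon big1 // => k _; rewrite ffunE expr0. Qed.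

Lemma xmon_unit (i : 'I_n) : xmon x (eunit i) = x i.
Proof.
rewrite -{1}(add0E (eunit i)) xmon_cons ?xmon0 ?mulr1 // => k _; by rewrite ffunE.
Qed.

Lemma foldr_id (T : Type) (s : seq 'I_n) (r : T) :
  foldr (fun (i : 'I_n) (acc : T) => acc) r s = r.
Proof. by elim: s => //= ? ? ->. Qed.

Lemma foldr_eq_in (T : Type) (f g : 'I_n -> T -> T) z (l : seq 'I_n) :
  (forall k acc, k \in l -> f k acc = g k acc) -> foldr f z l = foldr g z l.
Proof.
elim: l => //= k l IH h; rewrite h ?inE ?eqxx // IH // => k' acc k'l.
by apply: h; rewrite inE k'l orbT.
Qed.

Variables (T : Type) (sg : 'I_n -> T -> T).
Definition sE (a : exps n) (r : T) := foldr (fun i acc => iter (a i) (sg i) acc) r (enum 'I_n).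

Lemma sE0 r : sE (exp0 n) r = r.
Proof.
by rewrite /sE; elim: (enum 'I_n) => //= i s ->; rewrite ffunE.
Qed.

Lemma sE_cons (a : exps n) (j : 'I_n) r : (forall k : 'I_n, (k < j)%N -> a k = 0%N) ->
  sE (addE a (eunit j)) r = sg j (sE a r).
Proof.
move=> h; rewrite /sE.
have [l1 [l2 [-> [h1 h2]]]] := enum_split j.
rewrite !foldr_cat /=.
have F1 : forall (b : exps n) z, (forall k, k \in l1 -> b k = 0%N) ->
    foldr (fun i acc => iter (b i) (sg i) acc) z l1 = z.
  move=> b z hb; elim: l1 hb {h1} => //= k l IH hb.
  by rewrite hb ?inE ?eqxx //= IH // => k' k'l; apply: hb; rewrite inE k'l orbT.
rewrite !F1; try by move=> k kl; rewrite ?ffunE h ?h1 //; case: eqP => // ekj;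
  have := h1 _ kl; rewrite ekj ltnn.
rewrite !ffunE eqxx addn1 iterS; congr (sg j (iter _ _ _)).
apply: foldr_eq_in => k acc kl; rewrite !ffunE.
by case: eqP => [ekj|]; [have := h2 _ kl; rewrite ekj ltnn | rewrite addn0].
Qed.

End XM.

Section Main.
Variables (R A : nzRingType) (iota : {rmorphism R -> A}) (n : nat) (x : 'I_n -> A)
  (coef : A -> exps n -> R) (supp : A -> seq (exps n)).
Hypothesis HPBW : sigma_PBW iota x coef supp.

Local Notation xm := (xmon x).

Lemma Hsupp a al : (al \in supp a) = (coef a al != 0).
Proof. by case: HPBW => _ []. Qed.
Lemma Huniq a : uniq (supp a).
Proof. by case: HPBW => _ []. Qed.
Lemma Hexp a : a = \sum_(al <- supp a) iota (coef a al) * xm al.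
Proof. by case: HPBW => _ []. Qed.
Lemma Hind (s : seq (exps n)) (c : exps n -> R) : uniq s ->
  \sum_(al <- s) iota (c al) * xm al = 0 -> forall al, al \in s -> c al = 0.
Proof. by move=> us hs; case: HPBW => _ [_ _ _ H] _ _ _; exact: H us hs. Qed.

Lemma sum_filter_in (T : eqType) (s t : seq T) (F : T -> A) :
  uniq s -> uniq t -> {subset s <= t} ->
  \sum_(a <- t) (if a \in s then F a else 0) = \sum_(a <- s) F a.
Proof.
move=> us ut st; rewrite -big_mkcond -big_filter /=; apply: perm_big.
apply: uniq_perm; [exact: filter_uniq | exact: us | ] => a.
rewrite mem_filter; apply/andP/idP => [[]//|h]; split=> //; exact: st.
Qed.

Lemma expand a t : uniq t -> {subset supp a <= t} ->
  a = \sum_(al <- t) iota (coef a al) * xm al.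
Proof.
move=> ut st; rewrite {1}(Hexp a) -(sum_filter_in _ (Huniq a) ut st).
apply: eq_bigr => al _; case: ifP => // /negbT; rewrite Hsupp negbK => /eqP ->.
by rewrite rmorph0 mul0r.
Qed.

Lemma coord (s : seq (exps n)) (c : exps n -> R) be : uniq s ->
  coef (\sum_(al <- s) iota (c al) * xm al) be = if be \in s then c be else 0.
Proof.
set a := \sum_(al <- s) _ => us.
pose t := undup (s ++ supp a).
have ut : uniq t by apply: undup_uniq.
have st : {subset s <= t} by move=> y ys; rewrite mem_undup mem_cat ys.
have at_ : {subset supp a <= t} by move=> y ys; rewrite mem_undup mem_cat ys orbT.
pose d al := (if al \in s then c al else 0) - coef a al.
have H0 : \sum_(al <- t) iota (d al) * xm al = 0.
  rewrite /d; under eq_bigr => al _ do rewrite rmorphB mulrBl.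
  rewrite sumrB -(expand ut at_); apply/eqP; rewrite subr_eq0 /a -(sum_filter_in _ us ut st); apply/eqP.
  by apply: eq_bigr => al _; case: ifP => //; rewrite rmorph0 mul0r.
case bt : (be \in t).
  by have := Hind ut H0 bt; rewrite /d => /eqP; rewrite subr_eq0 => /eqP <-.
have bs : be \in s = false by apply/negbTE/negP => /st; rewrite bt.
have : be \in supp a = false by apply/negbTE/negP => /at_; rewrite bt.
by rewrite bs Hsupp => /negbFE/eqP.
Qed.

Lemma coefD a b be : coef (a + b) be = coef a be + coef b be.
Proof.
pose t := undup (supp a ++ supp b).
have ut : uniq t by apply: undup_uniq.
have sa : {subset supp a <= t} by move=> y ys; rewrite mem_undup mem_cat ys.
have sb : {subset supp b <= t} by move=> y ys; rewrite mem_undup mem_cat ys orbT.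
rewrite {1}(expand ut sa) {1}(expand ut sb) -big_split /=.
under eq_bigr => al _ do rewrite -mulrDl -rmorphD.
rewrite coord //; case: ifP => // /negbT bt.
have /negbTE : be \notin supp a by apply: contra bt; apply: sa.
have /negbTE : be \notin supp b by apply: contra bt; apply: sb.
by rewrite !Hsupp => /negbFE/eqP -> /negbFE/eqP ->; rewrite addr0.
Qed.

Lemma coefM a r be : coef (iota r * a) be = r * coef a be.
Proof.
rewrite {1}(Hexp a) mulr_sumr.
under eq_bigr => al _ do rewrite mulrA -rmorphM.
rewrite coord ?Huniq //; case: ifP => // /negbT; rewrite Hsupp negbK => /eqP ->.
by rewrite mulr0.
Qed.

Lemma coef0 be : coef 0 be = 0.
Proof. by have := coefD 0 0 be; rewrite addr0 => /eqP; rewrite -subr_eq subrr eq_sym => /eqP. Qed.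

Lemma coefN a be : coef (- a) be = - coef a be.
Proof. by rewrite -mulN1r -(rmorphN1 iota) coefM mulN1r. Qed.

Lemma coefB a b be : coef (a - b) be = coef a be - coef b be.
Proof. by rewrite coefD coefN. Qed.

Lemma coef_sum (I : Type) (s : seq I) (F : I -> A) be :
  coef (\sum_(i <- s) F i) be = \sum_(i <- s) coef (F i) be.
Proof.
elim: s => [|i s IH]; first by rewrite !big_nil coef0.
by rewrite !big_cons coefD IH.
Qed.

Lemma coef_mon r al be : coef (iota r * xm al) be = if al == be then r else 0.
Proof.
have -> : iota r * xm al = \sum_(a <- [:: al]) iota r * xm a by rewrite big_seq1.
by rewrite coord // inE eq_sym.
Qed.

Lemma coef_eq0 a : (forall al, coef a al = 0) -> a = 0.
Proof.
move=> h; rewrite (Hexp a) big1 // => al _; by rewrite h rmorph0 mul0r.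
Qed.


Definition low k (a : A) := forall al, coef a al != 0 -> (deg al < k)%N.
Definition lowq (q : bool) k (a : A) := low k a /\ (q -> a = 0).

Lemma low0 k : low k 0.
Proof. by move=> al; rewrite coef0 eqxx. Qed.
Lemma lowD k a b : low k a -> low k b -> low k (a + b).
Proof.
move=> ha hb al; rewrite coefD => h.
have [e|] := eqVneq (coef a al) 0; last exact: ha.
by apply: hb; move: h; rewrite e add0r.
Qed.
Lemma lowM k r a : low k a -> low k (iota r * a).
Proof.
move=> ha al; rewrite coefM => h; apply: ha; apply: contraNneq h => ->; by rewrite mulr0.
Qed.
Lemma lowN k a : low k a -> low k (- a).
Proof. by move=> ha al; rewrite coefN oppr_eq0; apply: ha. Qed.
Lemma lowB k a b : low k a -> low k b -> low k (a - b).
Proof. by move=> ha hb; apply: lowD => //; apply: lowN. Qed.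
Lemma low_le k k' a : (k <= k')%N -> low k a -> low k' a.
Proof. by move=> kk ha al /ha h; apply: leq_trans kk. Qed.
Lemma low_mon r al : low (deg al).+1 (iota r * xm al).
Proof. by move=> be; rewrite coef_mon; case: (al =P be) => [<- _|_]; [exact: ltnSn | rewrite eqxx]. Qed.
Lemma low_xm al : low (deg al).+1 (xm al).
Proof. by rewrite -[xm al]mul1r -(rmorph1 iota); apply: low_mon. Qed.
Lemma low_sum k (I : eqType) (s : seq I) (F : I -> A) :
  (forall i, i \in s -> low k (F i)) -> low k (\sum_(i <- s) F i).
Proof.
elim: s => [|i s IH] h; first by rewrite big_nil; apply: low0.
rewrite big_cons; apply: lowD; first by apply: h; rewrite inE eqxx.
by apply: IH => j js; apply: h; rewrite inE js orbT.
Qed.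
Lemma low_eq0 a : low 0 a -> a = 0.
Proof. by move=> h; apply: coef_eq0 => al; apply/eqP; apply: contraT => /h. Qed.
Lemma low_supp k a : low k a -> forall al, al \in supp a -> (deg al < k)%N.
Proof. by move=> h al; rewrite Hsupp; apply: h. Qed.
Lemma low_ind (P : A -> Prop) k a : low k a ->
  (forall b c, P b -> P c -> P (b + c)) -> P 0 ->
  (forall r al, (deg al < k)%N -> P (iota r * xm al)) -> P a.
Proof.
move=> ha hD h0 hm; rewrite (Hexp a).
have : forall al, al \in supp a -> (deg al < k)%N by apply: low_supp.
elim: (supp a) => [|al s IH] h; first by rewrite big_nil.
rewrite big_cons; apply: hD; first by apply: hm; apply: h; rewrite inE eqxx.
by apply: IH => be bs; apply: h; rewrite inE bs orbT.
Qed.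

Lemma lowq0 q k : lowq q k 0.
Proof. by split=> //; apply: low0. Qed.
Lemma lowqD q k a b : lowq q k a -> lowq q k b -> lowq q k (a + b).
Proof. by move=> [ha ha'] [hb hb']; split; [apply: lowD|move=> /[dup] /ha' -> /hb' ->; rewrite addr0]. Qed.
Lemma lowqM q k r a : lowq q k a -> lowq q k (iota r * a).
Proof. by move=> [ha ha']; split; [apply: lowM|move=> /ha' ->; rewrite mulr0]. Qed.
Lemma lowqN q k a : lowq q k a -> lowq q k (- a).
Proof. by move=> [ha ha']; split; [apply: lowN|move=> /ha' ->; rewrite oppr0]. Qed.
Lemma lowqB q k a b : lowq q k a -> lowq q k b -> lowq q k (a - b).
Proof. by move=> ha hb; apply: lowqD => //; apply: lowqN. Qed.
Lemma lowq_le q k k' a : (k <= k')%N -> lowq q k a -> lowq q k' a.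
Proof. by move=> kk [ha ha']; split=> //; apply: low_le ha. Qed.
Lemma lowq_mon (q : bool) r al : (q -> r = 0) -> lowq q (deg al).+1 (iota r * xm al).
Proof. by move=> h; split; [apply: low_mon|move=> /h ->; rewrite rmorph0 mul0r]. Qed.

Local Notation sig := (sigmai iota x coef).
Local Notation sigE := (sigmaE iota x coef).
Local Notation cabx := (cab x coef).

Lemma eunit_neq0 (i : 'I_n) : (exp0 n == eunit i) = false.
Proof. by apply/negbTE/negP => /eqP e; have := deg_eunit i; rewrite -e deg_exp0. Qed.

Lemma xr (q : bool) (Hq : q -> quasi_commutative iota x) i r : exists r',
  x i * iota r = iota (sig i r) * x i + iota r' /\ (q -> r' = 0).
Proof.
have [c [r' [E hq]]] : exists c r', x i * iota r = iota c * x i + iota r' /\ (q -> r' = 0).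
  have [->|rnz] := eqVneq r 0.
    by exists 0, 0; rewrite !rmorph0 mulr0 mul0r addr0.
  case: q Hq => [/(_ isT) [h _]|_].
    by have [c _ e] := h i r rnz; exists c, 0; rewrite rmorph0 addr0.
  case: HPBW => _ _ _ h4 _; have [c _ [r' e]] := h4 i r rnz.
  by exists c, r'; split=> //; rewrite -e addrC subrK.
exists r'; suff -> : sig i r = c by [].
rewrite /sigmai E coefD -(xmon_unit x i) coef_mon eqxx.
by rewrite -[iota r']mulr1 -(xmon0 x) coef_mon eunit_neq0 addr0.
Qed.

Lemma xx (q : bool) (Hq : q -> quasi_commutative iota x) i j : exists c rem,
  x i * x j = iota c * x j * x i + rem /\ lowq q 2 rem.
Proof.
case: q Hq => [/(_ isT) [_ h]|_].
  by have [c _ e] := h j i; exists c, 0; rewrite addr0; split=> //; apply: lowq0.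
case: HPBW => _ _ _ _ h5; have [c _ [r0 [r e]]] := h5 j i.
exists c, (iota r0 + \sum_(k < n) iota (r k) * x k); split; first by rewrite -e addrC subrK.
split=> //; apply: lowD.
  by rewrite -[iota r0]mulr1 -(xmon0 x); apply: (low_le _ (@low_mon _ _)); rewrite deg_exp0.
apply: low_sum => k _; rewrite -(xmon_unit x k).
by apply: (low_le _ (@low_mon _ _)); rewrite deg_eunit.
Qed.

Lemma P_all d : forall (q : bool), (q -> quasi_commutative iota x) ->
  forall (al : exps n) i, (deg al < d)%N ->
  exists u, lowq q (deg al).+1 (x i * xm al - iota u * xm (addE al (eunit i))).
Proof.
elim: d => [//|d IH] q Hq al i dal.
have FX : forall k a j, (k <= d)%N -> low k a -> low k.+1 (x j * a).
  move=> k a j kd ha; apply: (low_ind (P := fun b => low k.+1 (x j * b)) ha).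
  - by move=> b c hb hc; rewrite mulrDr; apply: lowD.
  - by rewrite mulr0; apply: low0.
  move=> r be dbe; have [r' [E _]] := xr (q:=false) (fun h => False_ind _ (notF h)) j r.
  rewrite mulrA E mulrDl.
  apply: lowD; last by apply: (low_le _ (@low_mon _ _)); rewrite ltnS ltnW.
  have [u [hu _]] := IH false (fun h => False_ind _ (notF h)) be j (leq_trans dbe kd).
  rewrite -mulrA -[x j * xm be](subrK (iota u * xm (addE be (eunit j)))) mulrDr.
  apply: lowD; first by apply: lowM; apply: (low_le _ hu); rewrite ltnS ltnW.
  by rewrite mulrA -rmorphM; apply: (low_le _ (@low_mon _ _)); rewrite degD deg_eunit addn1.
have FXq : forall k a j, (k <= d)%N -> lowq q k a -> lowq q k.+1 (x j * a).
  move=> k a j kd [ha ha']; split; first exact: FX.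
  by move=> /ha' ->; rewrite mulr0.
have [d0|dpos] := posnP (deg al).
  exists 1; rewrite (deg_eq0 d0) add0E xmon0 mulr1 rmorph1 mul1r (xmon_unit x) subrr.
  exact: lowq0.
have [j [al' [Eal [zal' dal']]]] := first_dec dpos.
have [ij|ji] := leqP i j.
  exists 1; rewrite rmorph1 mul1r xmon_cons ?subrr; first exact: lowq0.
  move=> k ki; rewrite Eal !ffunE zal' ?(leq_trans ki ij) //.
  by case: eqP => // ekj; move: ki; rewrite ekj ltnNge ij.
have dal'd : (deg al' < d)%N by rewrite dal' -ltnS prednK.
have [c [rem [E1 hrem]]] := xx Hq i j.
have [u' hu'] := IH q Hq al' i dal'd.
set be := addE al' (eunit i).
have zbe : forall k : 'I_n, (k < j)%N -> be k = 0%N.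
  move=> k kj; rewrite ffunE zal' //= ffunE; case: eqP => // eki.
  by move: kj; rewrite eki ltnNge ltnW.
have [r'' [E2 hr'']] := xr Hq j u'.
exists (c * sig j u').
have Ebe : addE be (eunit j) = addE al (eunit i).
  by rewrite Eal /be -!addEA [addE (eunit i) _]addEC.
set rem' := x i * xm al' - iota u' * xm be in hu'.
have -> : x i * xm al = iota (c * sig j u') * xm (addE al (eunit i)) +
    (iota (c * r'') * xm be + iota c * (x j * rem') + rem * xm al').
  rewrite {1}Eal xmon_cons // mulrA E1 mulrDl -!mulrA.
  rewrite -[x i * xm al'](subrK (iota u' * xm be)) -/rem' mulrDr mulrA E2.
  rewrite -Ebe xmon_cons // !rmorphM mulrDl mulrDr !mulrA.
  by rewrite -!addrA mulrDr !mulrA -!addrA addrCA; congr (_ + _); rewrite addrCA.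
rewrite addrC addKr.
have dal1 : (deg al).+1 = (deg al').+2 by rewrite dal' prednK.
apply: lowqD; first apply: lowqD.
- have h0 : q -> c * r'' = 0 by move=> /hr'' ->; rewrite mulr0.
  by apply: (lowq_le _ (lowq_mon _ h0)); rewrite /be degD deg_eunit addn1 dal' prednK.
- by apply: lowqM; rewrite dal1; apply: (FXq _ _ _ dal'd hu').
case: hrem => hrem hrem'; split; last by move=> /hrem' ->; rewrite mul0r.
apply: (low_ind (P := fun b => low (deg al).+1 (b * xm al')) hrem).
- by move=> b b' hb hb'; rewrite mulrDl; apply: lowD.
- by rewrite mul0r; apply: low0.
move=> r be' dbe'; rewrite -mulrA; apply: lowM.
have [d0|d1] := posnP (deg be').
  rewrite (deg_eq0 d0) xmon0 mul1r; apply: (low_le _ (@low_xm _)); by rewrite dal1.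
have [k [be'' [Ebe' [_ dbe'']]]] := first_dec d1.
have -> : be' = eunit k.
  rewrite Ebe' (deg_eq0 (n:=n) (a:=be'')) ?add0E //.
  by rewrite dbe''; move: dbe' d1; case: (deg be') => [|[]].
rewrite (xmon_unit x) dal1; apply: FX; first by rewrite -ltnS -dal1.
exact: low_xm.
Qed.

Let nq : false -> quasi_commutative iota x := fun h => False_ind _ (notF h).

Lemma P (q : bool) (Hq : q -> quasi_commutative iota x) al i : exists u,
  lowq q (deg al).+1 (x i * xm al - iota u * xm (addE al (eunit i))).
Proof. exact: (@P_all (deg al).+1 q Hq al i (ltnSn _)). Qed.

Lemma FX k a i : low k a -> low k.+1 (x i * a).
Proof.
move=> ha; apply: (low_ind (P := fun b => low k.+1 (x i * b)) ha).
- by move=> b c hb hc; rewrite mulrDr; apply: lowD.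
- by rewrite mulr0; apply: low0.
move=> r be dbe; have [r' [E _]] := xr nq i r.
rewrite mulrA E mulrDl.
apply: lowD; last by apply: (low_le _ (@low_mon _ _)); rewrite ltnS ltnW.
have [u [hu _]] := P nq be i.
rewrite -mulrA -[x i * xm be](subrK (iota u * xm (addE be (eunit i)))) mulrDr.
apply: lowD; first by apply: lowM; apply: (low_le _ hu); rewrite ltnS ltnW.
by rewrite mulrA -rmorphM; apply: (low_le _ (@low_mon _ _)); rewrite degD deg_eunit addn1.
Qed.

Lemma FXq q k a i : lowq q k a -> lowq q k.+1 (x i * a).
Proof. by move=> [ha ha']; split; [apply: FX | move=> /ha' ->; rewrite mulr0]. Qed.

Lemma sigE0 r : sigE (exp0 n) r = r.
Proof. exact: (sE0 (sigmai iota x coef)). Qed.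

Lemma sigE_cons (a : exps n) (j : 'I_n) r : (forall k : 'I_n, (k < j)%N -> a k = 0%N) ->
  sigE (addE a (eunit j)) r = sig j (sigE a r).
Proof. exact: (sE_cons (sigmai iota x coef)). Qed.

Lemma S_all d (q : bool) (Hq : q -> quasi_commutative iota x) : forall th r,
  (deg th < d)%N -> lowq q (deg th) (xm th * iota r - iota (sigE th r) * xm th).
Proof.
elim: d => [//|d IH] th r dth.
have [d0|dpos] := posnP (deg th).
  by rewrite (deg_eq0 d0) xmon0 sigE0 mul1r mulr1 subrr; apply: lowq0.
have [j [th' [Eth [zth' dth']]]] := first_dec dpos.
have dth'd : (deg th' < d)%N by rewrite dth' -ltnS prednK.
have dth1 : deg th = (deg th').+1 by rewrite dth' prednK.
have hu := IH th' r dth'd.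
set rem' := xm th' * iota r - _ in hu.
have [r'' [E hr'']] := xr Hq j (sigE th' r).
rewrite Eth xmon_cons // sigE_cons // -mulrA.
rewrite -[xm th' * iota r](subrK (iota (sigE th' r) * xm th')) -/rem' mulrDr mulrA E.
rewrite mulrDl -mulrA addrCA addrAC subrr add0r.
rewrite -Eth dth1; apply: lowqD; first by apply: FXq.
exact: lowq_mon.
Qed.

Lemma S (q : bool) (Hq : q -> quasi_commutative iota x) th r :
  lowq q (deg th) (xm th * iota r - iota (sigE th r) * xm th).
Proof. exact: (@S_all (deg th).+1 q Hq th r (ltnSn _)). Qed.

Lemma Xu_all d (q : bool) (Hq : q -> quasi_commutative iota x) : forall al be,
  (deg al < d)%N -> exists u,
  lowq q (deg al + deg be) (xm al * xm be - iota u * xm (addE al be)).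
Proof.
elim: d => [//|d IH] al be dal.
have [d0|dpos] := posnP (deg al).
  exists 1; rewrite (deg_eq0 d0) xmon0 add0E mul1r rmorph1 mul1r subrr; exact: lowq0.
have [j [al' [Eal [zal' dal']]]] := first_dec dpos.
have dal'd : (deg al' < d)%N by rewrite dal' -ltnS prednK.
have dal1 : deg al = (deg al').+1 by rewrite dal' prednK.
have [u' hu'] := IH al' be dal'd.
set rem' := _ - _ in hu'.
have [r'' [E hr'']] := xr Hq j u'.
have [v hv] := P Hq (addE al' be) j.
set rem'' := _ - _ in hv.
have Eab : addE (addE al' be) (eunit j) = addE al be.
  by rewrite Eal -!addEA [addE be _]addEC.
exists (sig j u' * v).
rewrite [in xm al]Eal xmon_cons // -mulrA.
rewrite -[xm al' * xm be](subrK (iota u' * xm (addE al' be))) -/rem' mulrDr mulrA E mulrDl.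
rewrite -mulrA -[x j * xm (addE al' be)](subrK (iota v * xm (addE (addE al' be) (eunit j)))) -/rem''.
rewrite Eab.
set T := iota (sig j u' * v) * xm (addE al be).
have -> : x j * rem' + (iota (sig j u') * (rem'' + iota v * xm (addE al be)) +
    iota r'' * xm (addE al' be)) - T =
  iota (sig j u') * rem'' + iota r'' * xm (addE al' be) + x j * rem'.
  by rewrite [iota (sig j u') * (_ + _)]mulrDr [iota (sig j u') * (iota v * _)]mulrA -rmorphM -/T [_ + T + _]addrAC addrA addrK addrC.
rewrite dal1 addSn; apply: lowqD; first apply: lowqD.
- by apply: lowqM; rewrite -degD.
- by rewrite -degD; apply: lowq_mon.
- by apply: FXq.
Qed.

Lemma X (q : bool) (Hq : q -> quasi_commutative iota x) al be :
  lowq q (deg al + deg be) (xm al * xm be - iota (cabx al be) * xm (addE al be)).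
Proof.
have [u hu] := @Xu_all (deg al).+1 q Hq al be (ltnSn _).
suff -> : cabx al be = u by [].
have [hl _] := hu.
rewrite /cab -[xm al * xm be](subrK (iota u * xm (addE al be))) coefD coef_mon eqxx.
have : coef (xm al * xm be - iota u * xm (addE al be)) (addE al be) == 0.
  by apply: contraT => /hl; rewrite degD ltnn.
by move=> /eqP ->; rewrite add0r.
Qed.

Lemma sig_eq i r c r' : x i * iota r = iota c * x i + iota r' -> sig i r = c.
Proof.
move=> E; rewrite /sigmai E coefD -(xmon_unit x i) coef_mon eqxx.
by rewrite -[iota r']mulr1 -(xmon0 x) coef_mon eunit_neq0 addr0.
Qed.

Lemma sig_nz i r : r != 0 -> sig i r != 0.
Proof.
move=> rnz; case: HPBW => _ _ _ h4 _; have [c cnz [r' e]] := h4 i r rnz.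
by rewrite (@sig_eq i r c r') // -e addrC subrK.
Qed.

Lemma sigE_nz th r : r != 0 -> sigE th r != 0.
Proof.
move: {2}(deg th) (erefl (deg th)) => d; elim: d th => [|d IH] th dth rnz.
  by rewrite (deg_eq0 dth) sigE0.
have [|j [th' [Eth [zth' dth']]]] := first_dec (n:=n) (a:=th); first by rewrite dth.
by rewrite Eth sigE_cons //; apply: sig_nz; apply: IH; rewrite // dth'  dth.
Qed.

Lemma sigE_0 th : sigE th 0 = 0.
Proof.
rewrite /sigmaE; elim: (enum 'I_n) => //= i s ->; elim: (th i) => //= k ->.
by rewrite /sigmai rmorph0 mulr0 coef0.
Qed.

Lemma lowmul_all K : forall k, (k <= K)%N -> forall a b l,
  low k a -> low l.+1 b -> low (k + l) (a * b).
Proof.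
elim: K => [|K IH] k kK a b l ha hb.
  move: kK; rewrite leqn0 => /eqP k0; move: ha; rewrite k0 => /low_eq0 ->.
  by rewrite mul0r; apply: low0.
apply: (low_ind (P := fun a => low (k + l) (a * b)) ha).
- by move=> c c' hc hc'; rewrite mulrDl; apply: lowD.
- by rewrite mul0r; apply: low0.
move=> r al dal; rewrite -mulrA; apply: lowM.
apply: (low_ind (P := fun b => low (k + l) (xm al * b)) hb).
- by move=> c c' hc hc'; rewrite mulrDr; apply: lowD.
- by rewrite mulr0; apply: low0.
move=> r' be dbe; rewrite mulrA.
have [hS _] := S nq al r'.
rewrite -[xm al * iota r'](subrK (iota (sigE al r') * xm al)) mulrDl.
apply: lowD.
  apply: (low_le _ (IH _ _ _ _ _ hS (@low_xm be))).
    by rewrite leq_add // ltnW.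
  by rewrite -ltnS (leq_trans dal).
have [hX _] := X nq al be.
rewrite -mulrA -[xm al * xm be](subrK (iota (cabx al be) * xm (addE al be))) mulrDr.
apply: lowD; first by apply: lowM; apply: (low_le _ hX); rewrite leq_add // ltnW.
rewrite mulrA -rmorphM; apply: (low_le _ (@low_mon _ _)).
by rewrite degD -addSn leq_add.
Qed.

Lemma lowmul k a b l : low k a -> low l.+1 b -> low (k + l) (a * b).
Proof. exact: (lowmul_all (leqnn k)). Qed.

Lemma sum_filter_inR (T : eqType) (s t : seq T) (F : T -> R) :
  uniq s -> uniq t -> {subset s <= t} ->
  \sum_(a <- t) (if a \in s then F a else 0) = \sum_(a <- s) F a.
Proof.
move=> us ut st; rewrite -big_mkcond -big_filter /=; apply: perm_big.
apply: uniq_perm; [exact: filter_uniq | exact: us | ] => a.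
rewrite mem_filter; apply/andP/idP => [[]//|h]; split=> //; exact: st.
Qed.

Lemma sum_eq1 (s : seq (exps n)) (z : exps n) (F : exps n -> R) : uniq s ->
  \sum_(al <- s) (if al == z then F al else 0) = if z \in s then F z else 0.
Proof.
move=> us; case: ifP => zs.
  have -> : \sum_(al <- s) (if al == z then F al else 0) =
      \sum_(al <- s) (if al \in [:: z] then F al else 0).
    by apply: eq_bigr => al _; rewrite inE.
  rewrite sum_filter_inR ?big_seq1 //.
  by move=> y; rewrite inE => /eqP ->.
rewrite big_seq big1 // => al als; case: eqP => // e; by move: zs; rewrite -e als.
Qed.

Lemma sum_nz (T : eqType) (s : seq T) (F : T -> R) :
  \sum_(al <- s) F al != 0 -> exists2 al, al \in s & F al != 0.
Proof.
elim: s => [|y s IH]; first by rewrite big_nil eqxx.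
rewrite big_cons; have [e|ne] := eqVneq (F y) 0.
  by rewrite e add0r => /IH [al als h]; exists al; rewrite // inE als orbT.
by move=> _; exists y; rewrite ?inE ?eqxx.
Qed.

Lemma TOP D a th : low D.+1 a ->
  [/\ low (deg th + D).+1 (xm th * a),
      forall ze, deg ze = D ->
        coef (xm th * a) (addE th ze) = sigE th (coef a ze) * cabx th ze
    & forall de, deg de = (deg th + D)%N -> coef (xm th * a) de != 0 ->
        exists ze, de = addE th ze /\ coef a ze != 0].
Proof.
move=> ha.
set G := \sum_(al <- supp a) iota (sigE th (coef a al) * cabx th al) * xm (addE th al).
have hR : low (deg th + D) (xm th * a - G).
  rewrite {1}(Hexp a) mulr_sumr /G -sumrB; apply: low_sum => al als.
  have dal : (deg al <= D)%N by rewrite -ltnS; apply: (low_supp ha).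
  have [hS _] := S nq th (coef a al).
  have [hX _] := X nq th al.
  rewrite mulrA -[xm th * iota _](subrK (iota (sigE th (coef a al)) * xm th)) mulrDl.
  rewrite -addrA; apply: lowD.
    by apply: (low_le _ (lowmul hS (@low_xm al))); rewrite leq_add2l.
  rewrite -mulrA -[xm th * xm al](subrK (iota (cabx th al) * xm (addE th al))).
  rewrite mulrDr rmorphM mulrA addrK; apply: lowM; apply: (low_le _ hX).
  by rewrite leq_add2l.
have coefG : forall de, deg de = (deg th + D)%N -> coef (xm th * a) de = coef G de.
  move=> de dde; rewrite -[xm th * a](subrK G) coefD.
  have : coef (xm th * a - G) de == 0 by apply: contraT => /hR; rewrite dde ltnn.
  by move=> /eqP ->; rewrite add0r.
have cG : forall de, coef G de = \sum_(al <- supp a)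
    (if addE th al == de then sigE th (coef a al) * cabx th al else 0).
  by move=> de; rewrite /G coef_sum; apply: eq_bigr => al _; rewrite coef_mon.
split.
- have := lowmul (@low_xm th) ha; by rewrite addSn.
- move=> ze dze; rewrite coefG ?degD ?dze // cG.
  have -> : \sum_(al <- supp a) (if addE th al == addE th ze
        then sigE th (coef a al) * cabx th al else 0) =
      \sum_(al <- supp a) (if al == ze then sigE th (coef a al) * cabx th al else 0).
    apply: eq_bigr => al _; congr (if _ then _ else _).
    by apply/eqP/eqP => [/addEI|->].
  rewrite sum_eq1 ?Huniq //; case: ifP => // /negbT; rewrite Hsupp negbK => /eqP ->.
  by rewrite sigE_0 mul0r.
- move=> de dde; rewrite coefG // cG => /sum_nz [al als].
  case: (addE th al =P de) => [<- _|_]; last by rewrite eqxx.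
  by exists al; split => //; rewrite -Hsupp.
Qed.

Section Omax.
Variables (T : eqType) (le : rel T).
Hypothesis Hle : total_order le.

Lemma omax_some s X : omax le s = Some X -> X \in s /\ forall Y, Y \in s -> le X Y.
Proof.
case: Hle => rf _ tr tot.
elim: s X => [//|a s IH] X /=.
case E: (omax le s) => [Y|].
  have [Ys hY] := IH _ E.
  case: ifP => aY [<-].
    split; first by rewrite inE eqxx.
    by move=> Z; rewrite inE => /orP[/eqP->|/hY]; [apply: rf|apply: tr].
  split; first by rewrite inE Ys orbT.
  move=> Z; rewrite inE => /orP[/eqP->|/hY//].
  by have := tot a Y; rewrite aY.
move=> [<-]; split; first by rewrite inE eqxx.
have s0 : s = [::] by case: s IH E => //= b s _; case: (omax le s) => [?|]; [case: ifP|].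
by move=> Z; rewrite s0 inE => /eqP ->; apply: rf.
Qed.

Lemma omax_none s : omax le s = None -> s = [::].
Proof. by case: s => //= a s; case: (omax le s) => [?|]; [case: ifP|]. Qed.

Lemma omax_char s X : X \in s -> (forall Y, Y \in s -> le X Y) -> omax le s = Some X.
Proof.
case: Hle => _ asym _ _ Xs hX.
case E: (omax le s) => [Z|]; last by move: Xs; rewrite (omax_none E).
have [Zs hZ] := omax_some E; congr Some; apply: asym.
by rewrite hZ // hX.
Qed.
End Omax.

Variables (ordA : rel (exps n)) (m : nat) (ordM : rel (exps n * 'I_m)).
Hypothesis HordA : monomial_order_A x supp ordA.
Hypothesis HordM : monomial_order_Am x supp ordA ordM.
Hypothesis Hcab : forall a b : exps n, two_sided_unit (cab x coef a b).

Local Notation vec := 'cV[A]_m.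
Local Notation lmM := (lm supp ordM).
Local Notation vc := (vcoef coef).
Implicit Types (f p h : vec).
Definition gtM (X Y : exps n * 'I_m) := ordM X Y && (X != Y).

Lemma totM : total_order ordM. Proof. by case: HordM. Qed.
Lemma totA : total_order ordA. Proof. by case: HordA. Qed.

Lemma ordM_refl X : ordM X X. Proof. by case: totM. Qed.
Lemma ordM_trans Y X Z : ordM X Y -> ordM Y Z -> ordM X Z.
Proof. by case: totM => _ _ tr _; apply: tr. Qed.
Lemma ordM_asym X Y : ordM X Y -> ordM Y X -> X = Y.
Proof. by case: totM => _ asym _ _ h1 h2; apply: asym; rewrite h1 h2. Qed.
Lemma gtM_irr X : gtM X X = false. Proof. by rewrite /gtM eqxx andbF. Qed.
Lemma gtM_ordM X Y : gtM X Y -> ordM X Y. Proof. by case/andP. Qed.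
Lemma gtM_trans_l Y X Z : gtM X Y -> ordM Y Z -> gtM X Z.
Proof.
move=> /andP[xy nxy] yz; rewrite /gtM (ordM_trans xy yz) /=.
by apply: contraNneq nxy => exz; apply/eqP; apply: (ordM_asym xy); rewrite exz.
Qed.
Lemma gtM_trans_r Y X Z : ordM X Y -> gtM Y Z -> gtM X Z.
Proof.
move=> xy /andP[yz nyz]; rewrite /gtM (ordM_trans xy yz) /=.
by apply: contraNneq nyz => exz; apply/eqP; apply: (ordM_asym yz); rewrite -exz.
Qed.
Lemma deg_gtM X Y : (deg Y.1 < deg X.1)%N -> gtM X Y.
Proof. by case: HordM => _ _ _; apply. Qed.

Lemma mem_vsupp f X : (X \in vsupp supp f) = (vc f X != 0).
Proof.
case: X => al i; rewrite /vcoef /= -Hsupp.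
apply/allpairsPdep/idP => [[j [be [_ hb [-> ->]]]] //|h].
by exists i, al; rewrite mem_enum.
Qed.

Lemma lmP f X : lmM f = Some X <-> vc f X != 0 /\ (forall Y, vc f Y != 0 -> ordM X Y).
Proof.
split.
  move=> /(omax_some totM) [h1 h2]; split; first by rewrite -mem_vsupp.
  by move=> Y; rewrite -mem_vsupp; apply: h2.
move=> [h1 h2]; apply: (omax_char totM); first by rewrite mem_vsupp.
by move=> Y; rewrite mem_vsupp; apply: h2.
Qed.

Lemma vc0 X : vc (0 : vec) X = 0.
Proof. by rewrite /vcoef mxE coef0. Qed.

Lemma vc_eq0 f : (forall X, vc f X = 0) -> f = 0.
Proof.
move=> h; apply/matrixP => i j; rewrite (ord1 j) mxE; apply: coef_eq0 => al.
exact: (h (al, i)).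
Qed.

Lemma lm_none f : lmM f = None -> f = 0.
Proof.
move=> /omax_none h; apply: vc_eq0 => X; apply/eqP; apply: contraT.
by rewrite -mem_vsupp h.
Qed.

Lemma lm0 : lmM (0 : vec) = None.
Proof.
case E: (lmM 0) => [X|] //; have [h _] := (proj1 (lmP 0 X) E).
by move: h; rewrite vc0 eqxx.
Qed.

Lemma lm_some f : f != 0 -> exists X, lmM f = Some X.
Proof.
case E: (lmM f) => [X|]; first by exists X.
by rewrite (lm_none E) eqxx.
Qed.

Lemma gtO_char T p : gtO ordM (Some T) (lmM p) <-> (forall Y, vc p Y != 0 -> gtM T Y).
Proof.
case E: (lmM p) => [X|] /=.
  have [hX hY] := proj1 (lmP p X) E.
  split; last by move=> h; apply: h.
  by move=> hTX Y /hY; apply: gtM_trans_l hTX.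
split=> // _ Y; by rewrite (lm_none E) vc0 eqxx.
Qed.

Lemma vcD f (g : vec) X : vc (f + g) X = vc f X + vc g X.
Proof. by rewrite /vcoef mxE coefD. Qed.
Lemma vcN f X : vc (- f) X = - vc f X.
Proof. by rewrite /vcoef mxE coefN. Qed.
Lemma vcB f (g : vec) X : vc (f - g) X = vc f X - vc g X.
Proof. by rewrite vcD vcN. Qed.
Lemma vc_sum (I : Type) (s : seq I) (F : I -> vec) X :
  vc (\sum_(i <- s) F i) X = \sum_(i <- s) vc (F i) X.
Proof.
elim: s => [|i s IH]; first by rewrite !big_nil vc0.
by rewrite !big_cons vcD IH.
Qed.
Lemma vcZ r f X : vc ((iota r) *: f) X = r * vc f X.
Proof. by rewrite /vcoef mxE coefM. Qed.

Lemma cab_nz a b : cab x coef a b != 0.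
Proof.
have [u [h1 _]] := Hcab a b; apply/negP => /eqP e; move: h1.
by rewrite e mulr0 => /eqP; rewrite eq_sym oner_eq0.
Qed.

Lemma mul_unit_nz r a b : r != 0 -> r * cab x coef a b != 0.
Proof.
have [u [_ h2]] := Hcab a b => rnz; apply/negP => /eqP e.
by move: rnz; rewrite -[r]mulr1 -h2 mulrA e mul0r eqxx.
Qed.

Lemma lmA_prod th b : lmA supp ordA (xm th * xm b) = Some (addE th b).
Proof.
apply: (omax_char totA).
  by rewrite Hsupp; apply: cab_nz.
move=> de; rewrite Hsupp => hde.
have [<-|ne] := eqVneq (addE th b) de; first by case: totA.
have [hX _] := X nq th b.
case: HordA => _ _ _ h; apply: (proj1 (andP (h _ _ _))).
rewrite degD; apply: hX.
by rewrite coefB coef_mon (negbTE ne) subr0.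
Qed.

Lemma compat th b j a i : ordM (b, j) (a, i) -> ordM (addE th b, j) (addE th a, i).
Proof.
move=> h; case: HordM => _ _ h3 _; have := h3 b j a i th h.
by rewrite !lmA_prod.
Qed.

Definition below (f : vec) T := forall Y, vc f Y != 0 -> ordM T Y.
Definition sbelow (f : vec) T := forall Y, vc f Y != 0 -> gtM T Y.

Lemma entry_low (f : vec) g k : below f (g, k) -> forall j, low (deg g).+1 (f j 0).
Proof.
move=> hb j ze hze; rewrite ltnS leqNgt; apply/negP => dz.
have h1 : ordM (g, k) (ze, j) by apply: hb.
have /andP[h2 ne] := @deg_gtM (ze, j) (g, k) dz.
by move: ne; rewrite (ordM_asym h2 h1) eqxx.
Qed.

Lemma Mlem th (f : vec) g k : below f (g, k) ->
  [/\ below (xm th *: f) (addE th g, k),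
      sbelow f (g, k) -> sbelow (xm th *: f) (addE th g, k)
    & vc (xm th *: f) (addE th g, k) = sigE th (vc f (g, k)) * cabx th g].
Proof.
move=> hb.
have key : forall de j, vc (xm th *: f) (de, j) != 0 ->
   gtM (addE th g, k) (de, j) \/ exists ze, de = addE th ze /\ vc f (ze, j) != 0.
  move=> de j; rewrite /vcoef /= mxE => hne.
  have [t1 _ t3] := TOP th (@entry_low f g k hb j).
  have := t1 _ hne; rewrite ltnS leq_eqVlt => /orP[/eqP dde|dlt].
    by right; apply: t3.
  by left; apply: deg_gtM; rewrite /= degD.
split.
- move=> [de j] /key [/gtM_ordM //|[ze [-> hz]]].
  by apply: compat; apply: hb.
- move=> hs [de j] /key [//|[ze [-> hz]]].
  have /andP[o ne] := hs _ hz; rewrite /gtM compat //=.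
  by apply: contra ne => /eqP [/addEI -> ->].
- by rewrite /vcoef /= mxE; have [_ t2 _] := TOP th (@entry_low f g k hb k); apply: t2.
Qed.

Lemma below_lm f X : lmM f = Some X -> below f X.
Proof. by move=> /lmP[]. Qed.

Lemma lm_xt th f g k : lmM f = Some (g, k) -> lmM (xm th *: f) = Some (addE th g, k).
Proof.
move=> E; have hb := below_lm E; have [h1 _ h3] := Mlem th hb.
apply/lmP; split=> //; rewrite h3; apply: mul_unit_nz; apply: sigE_nz.
by case: (proj1 (lmP _ _) E).
Qed.

Lemma lm_addlow f p T : lmM f = Some T -> sbelow p T ->
  lmM (f + p) = Some T /\ vc (f + p) T = vc f T.
Proof.
move=> /lmP [h1 h2] hp.
have pT : vc p T = 0 by apply/eqP; apply: contraT => /hp; rewrite gtM_irr.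
have e : vc (f + p) T = vc f T by rewrite vcD pT addr0.
split=> //; apply/lmP; split; first by rewrite e.
move=> Y; rewrite vcD => hY.
have [fY|] := eqVneq (vc f Y) 0; last by apply: h2.
by move: hY; rewrite fY add0r => /hp /gtM_ordM.
Qed.

Variable F : seq vec.
Local Notation red := (red1 iota x coef supp ordM F).
Local Notation redp := (redplus iota x coef supp ordM F).
Local Notation lcM := (lc coef supp ordM).

Lemma below_sum (I : eqType) (s : seq I) (G : I -> vec) T :
  (forall i, i \in s -> below (G i) T) -> below (\sum_(i <- s) G i) T.
Proof.
elim: s => [|i s IH] hG Y; first by rewrite big_nil vc0 eqxx.
rewrite big_cons vcD; have [e|ne] := eqVneq (vc (G i) Y) 0.
  rewrite e add0r; apply: IH => j js; apply: hG; by rewrite inE js orbT.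
by move=> _; apply: (hG i); rewrite ?inE ?eqxx.
Qed.

Lemma sbelow_sum (I : eqType) (s : seq I) (G : I -> vec) T :
  (forall i, i \in s -> sbelow (G i) T) -> sbelow (\sum_(i <- s) G i) T.
Proof.
elim: s => [|i s IH] hG Y; first by rewrite big_nil vc0 eqxx.
rewrite big_cons vcD; have [e|ne] := eqVneq (vc (G i) Y) 0.
  rewrite e add0r; apply: IH => j js; apply: hG; by rewrite inE js orbT.
by move=> _; apply: (hG i); rewrite ?inE ?eqxx.
Qed.

Lemma sbelowD p1 p2 T : sbelow p1 T -> sbelow p2 T -> sbelow (p1 + p2) T.
Proof.
move=> h1 h2 Y; rewrite vcD; have [e|ne] := eqVneq (vc p1 Y) 0.
  by rewrite e add0r; apply: h2.
by move=> _; apply: h1.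
Qed.

Lemma sbelow0 T : sbelow 0 T.
Proof. by move=> Y; rewrite vc0 eqxx. Qed.

Lemma red0 f h : red f h -> f = 0 -> h = 0.
Proof.
case => [[_ ->]//|[s [hs _ ->]]] f0.
case: s hs => [|e s] hs; first by rewrite big_nil f0 subr0.
have [_ [b [i [_ E]]]] := hs e (mem_head _ _); by rewrite f0 lm0 in E.
Qed.

Lemma lcE f X : lmM f = Some X -> lcM f = vc f X.
Proof. by rewrite /lc => ->. Qed.

Lemma red_dec f h T : red f h -> lmM f = Some T -> sbelow h T.
Proof.
case => [[f0 _]|[s [hs hlc ->]]] E; first by rewrite f0 lm0 in E.
case: T E => g k E.
set D := \sum_(e <- s) _.
have hterm : forall e, e \in s -> below ((iota e.2 * xm e.1.2) *: e.1.1) (g, k) /\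
    vc ((iota e.2 * xm e.1.2) *: e.1.1) (g, k) =
    e.2 * sigE e.1.2 (lcM e.1.1) *
      (if lmM e.1.1 is Some Y then cabx e.1.2 Y.1 else 0).
  move=> e es; have [_ [b [i [E1 E2]]]] := hs e es.
  move: E2; rewrite E => -[Eg Ek]; rewrite E1 (lcE E1) /= -scalerA.
  have [h1 _ h3] := Mlem e.1.2 (below_lm E1).
  rewrite -Eg -Ek in h1 h3; split.
    by move=> Y; rewrite vcZ => hY; apply: h1; apply: contraNneq hY => ->; rewrite mulr0.
  by rewrite vcZ h3 mulrA -Ek.
have bD : below D (g, k) by apply: below_sum => e /hterm [].
have cD : vc D (g, k) = lcM f.
  by rewrite vc_sum hlc; apply: eq_big_seq => e /hterm [].
have [hf1 hf2] := proj1 (lmP f (g, k)) E.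
move=> Y; rewrite vcB => hY.
have oY : ordM (g, k) Y.
  have [e|ne] := eqVneq (vc f Y) 0; last by apply: hf2.
  by apply: bD; move: hY; rewrite e sub0r oppr_eq0.
rewrite /gtM oY /=; apply: contra hY => /eqP <-.
by rewrite cD (lcE E) subrr.
Qed.

Lemma red_shift f h p T : red f h -> lmM f = Some T -> sbelow p T -> red (f + p) (h + p).
Proof.
case => [[f0 _]|[s [hs hlc Eh]]] E hp; first by rewrite f0 lm0 in E.
have [L1 L2] := lm_addlow E hp.
right; exists s; split.
- move=> e es; have [h1 [b [i [h2 h3]]]] := hs e es; split=> //.
  by exists b, i; split=> //; rewrite L1 -E.
- by rewrite (lcE L1) L2 -(lcE E).
- by rewrite Eh addrAC.
Qed.

Lemma redp_dec f h : redp f h -> (f = 0 -> h = 0) /\ (forall T, lmM f = Some T -> sbelow h T).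
Proof.
elim=> [f' h' r|f' g' h' r _ [IH1 IH2]].
  by split; [apply: red0 r|move=> T; apply: red_dec r].
split; first by move=> /(red0 r) /IH1.
move=> T ET.
have [g0|gnz] := eqVneq g' 0; first by rewrite (IH1 g0); apply: sbelow0.
have [T' ET'] := lm_some gnz.
have hT' : gtM T T' by apply: (red_dec r ET); case: (proj1 (lmP _ _) ET').
by move=> Y /(IH2 _ ET') hY; apply: gtM_trans_r (gtM_ordM hT') hY.
Qed.

Lemma part2 f h p : redp f h -> p = 0 \/ gtO ordM (lmM h) (lmM p) -> redp (f + p) (h + p).
Proof.
move=> r [->|]; first by rewrite !addr0.
case Eh: (lmM h) => [Th|//] hp'.
have hp : sbelow p Th by apply/gtO_char.
have key : forall f', redp f' h -> exists2 Tf, lmM f' = Some Tf & sbelow p Tf.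
  move=> f' r'; have [d1 d2] := redp_dec r'.
  have [f0|fnz] := eqVneq f' 0.
    by move: Eh; rewrite (d1 f0) lm0.
  have [Tf Ef] := lm_some fnz; exists Tf => //.
  have hT : gtM Tf Th by apply: (d2 _ Ef); case: (proj1 (lmP _ _) Eh).
  by move=> Y /hp hY; apply: gtM_trans_r (gtM_ordM hT) hY.
elim: r Eh hp key => [f' h' r|f' g' h' r r' IH] Eh hp key.
  have [Tf Ef hpf] := key _ (redplus_one r).
  by apply: redplus_one; apply: red_shift r Ef hpf.
have [Tf Ef hpf] := key _ (redplus_step r r').
apply: redplus_step (red_shift r Ef hpf) _.
apply: IH => // f'' r''; exact: key.
Qed.

Lemma Dlow (q : bool) (Hq : q -> quasi_commutative iota x) th r al :
  lowq q (deg th + deg al)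
    (xm th * (iota r * xm al) - iota (sigE th r * cabx th al) * xm (addE th al)).
Proof.
have [hS hS'] := S Hq th r.
have hX := X Hq th al.
set S0 := xm th * iota r - _ in hS hS'.
set X0 := xm th * xm al - _ in hX.
have -> : xm th * (iota r * xm al) - iota (sigE th r * cabx th al) * xm (addE th al) =
    iota (sigE th r) * X0 + S0 * xm al.
  rewrite /S0 /X0 mulrBr mulrBl !mulrA -rmorphM.
  by rewrite [RHS]addrC addrA subrK.
apply: lowqD; first by apply: lowqM.
split; first by apply: lowmul hS (@low_xm al).
by move=> /hS' ->; rewrite mul0r.
Qed.

Lemma red_xt (q : bool) (Hq : q -> quasi_commutative iota x) th f h g k :
  red f h -> lmM f = Some (g, k) ->
  exists p, [/\ sbelow p (addE th g, k), (q -> p = 0) & red (xm th *: f + p) (xm th *: h)].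
Proof.
move=> rfh E; have sh := red_dec rfh E.
case: rfh => [[f0 _]|[s [hs hlc Eh]]]; first by rewrite f0 lm0 in E.
set xt := xm th.
pose r' (e : vec * exps n * R) := sigE th e.2 * cabx th e.1.2.
pose s' := [seq (e.1.1, addE th e.1.2, r' e) | e <- s].
pose c e := iota (r' e) * xm (addE th e.1.2) - xt * (iota e.2 * xm e.1.2).
pose p := \sum_(e <- s) c e *: e.1.1.
have hinfo : forall e, e \in s -> exists b, lmM e.1.1 = Some (b, k) /\ addE e.1.2 b = g.
  move=> e es; have [_ [b [i [E1 E2]]]] := hs e es.
  by move: E2; rewrite E => -[-> ->]; exists b.
set T' := (addE th g, k).
have sp : sbelow p T'.
  apply: sbelow_sum => e es [de j]; rewrite /vcoef /= mxE.
  have [b [Eb Eg]] := hinfo e es.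
  have [hc _] := Dlow nq th e.2 e.1.2.
  have hc' : low (deg th + deg e.1.2) (c e) by rewrite /c -opprB; apply: lowN.
  have := lowmul hc' (@entry_low e.1.1 b k (below_lm Eb) j) => hl /hl dl.
  by apply: deg_gtM; rewrite /= degD -Eg degD addnA.
have Lxt := lm_xt th E.
have [L1 L2] := lm_addlow Lxt sp.
have Exth : xt *: h = xt *: f + p - \sum_(e <- s) (iota (r' e) * xm (addE th e.1.2)) *: e.1.1.
  rewrite Eh scalerBr scaler_sumr -addrA; congr (_ + _).
  rewrite /p -sumrB -sumrN; apply: eq_bigr => e _.
  by rewrite /c scalerBl addrAC subrr add0r scalerA.
exists p; split=> //.
  move=> qt; rewrite /p big1_seq // => e _.
  have [_ h0] := Dlow Hq th e.2 e.1.2.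
  by rewrite /c -opprB (h0 qt) oppr0 scale0r.
right; exists s'; split.
- move=> e'; rewrite /s' => /mapP [e es ->] /=.
  have [h1 _] := hs e es; split=> //.
  have [b [Eb Eg]] := hinfo e es; exists b, k; split=> //.
  by rewrite L1 /T' -Eg addEA.
- rewrite big_map (lcE L1) L2.
  have hxh : vc (xt *: h) T' = 0.
    have bh : below h (g, k) by move=> Y /sh /gtM_ordM.
    have [_ hb2 _] := Mlem th bh.
    by apply/eqP; apply: contraT => /(hb2 sh); rewrite gtM_irr.
  have hp0 : vc p T' = 0 by apply/eqP; apply: contraT => /sp; rewrite gtM_irr.
  move: hxh; rewrite Exth vcB vcD hp0 addr0 => /eqP; rewrite subr_eq0 => /eqP ->.
  rewrite vc_sum; apply: eq_big_seq => e es /=.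
  have [b [Eb Eg]] := hinfo e es.
  rewrite Eb (lcE Eb) /= -scalerA vcZ.
  have [_ _ h3] := Mlem (addE th e.1.2) (below_lm Eb).
  by rewrite /T' -Eg addEA h3 mulrA.
- by rewrite big_map.
Qed.

Lemma redp_xt (q : bool) (Hq : q -> quasi_commutative iota x) th f h :
  redp f h -> forall g k, lmM f = Some (g, k) ->
  exists p, [/\ sbelow p (addE th g, k), (q -> p = 0) & redp (xm th *: f + p) (xm th *: h)].
Proof.
elim => [f' h' r|f' g' h' r r' IH] g k E.
  by have [p [h1 h2 h3]] := red_xt Hq th r E; exists p; split => //; apply: redplus_one.
have [p1 [s1 q1 r1]] := red_xt Hq th r E.
have [g0|gnz] := eqVneq g' 0.
  have h0 := (redp_dec r').1 g0.
  exists p1; split=> //; apply: redplus_step r1 _.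
  by rewrite g0 h0 scaler0; apply: redplus_one; left.
have [[g2 k2] E2] := lm_some gnz.
have [p2 [s2 q2 r2]] := IH _ _ E2.
have sg : sbelow g' (g, k) := red_dec r E.
have bg : below g' (g, k) by move=> Y /sg /gtM_ordM.
have [_ hb2 _] := Mlem th bg.
have hT : gtM (addE th g, k) (addE th g2, k2).
  by apply: (hb2 sg); case: (proj1 (lmP _ _) (lm_xt th E2)).
have s2' : sbelow p2 (addE th g, k).
  by move=> Y /s2 hY; apply: gtM_trans_r (gtM_ordM hT) hY.
have [L1 _] := lm_addlow (lm_xt th E) s1.
exists (p1 + p2); split.
- exact: sbelowD.
- by move=> qt; rewrite q1 // q2 // addr0.
- by rewrite addrA; apply: redplus_step (red_shift r1 L1 s2') r2.
Qed.

Lemma main_lemma (f h : vec) (theta : exps n) :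
  let xt := xmon x theta in
  (red f h ->
     exists2 p : vec, p = 0 \/ gtO ordM (lmM (xt *: f)) (lmM p)
                         & red (xt *: f + p) (xt *: h))
  /\ (quasi_commutative iota x -> red f h -> red (xt *: f) (xt *: h))
  /\ (redp f h -> forall p : vec, p = 0 \/ gtO ordM (lmM h) (lmM p) ->
        redp (f + p) (h + p))
  /\ (redp f h ->
     exists2 p : vec, p = 0 \/ gtO ordM (lmM (xt *: f)) (lmM p)
                         & redp (xt *: f + p) (xt *: h))
  /\ (quasi_commutative iota x -> redp f h -> redp (xt *: f) (xt *: h))
  /\ (redp f 0 ->
     exists2 p : vec, p = 0 \/ gtO ordM (lmM (xt *: f)) (lmM p)
                         & redp (xt *: f + p) 0)
  /\ (quasi_commutative iota x -> redp f 0 -> redp (xt *: f) 0).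
Proof.
move=> xt.
have G1 : forall q : bool, (q -> quasi_commutative iota x) -> red f h -> exists p,
    [/\ p = 0 \/ gtO ordM (lmM (xt *: f)) (lmM p), (q -> p = 0) & red (xt *: f + p) (xt *: h)].
  move=> q Hq r; have [f0|fnz] := eqVneq f 0.
    have h0 := red0 r f0; exists 0; split; [by left|by []|].
    by rewrite f0 h0 scaler0 addr0; left.
  have [[g k] E] := lm_some fnz.
  have [p [s1 q1 r1]] := red_xt Hq theta r E.
  exists p; split=> //; right; rewrite /xt (lm_xt theta E); exact/gtO_char.
have G3 : forall (q : bool) h', (q -> quasi_commutative iota x) -> redp f h' -> exists p,
    [/\ p = 0 \/ gtO ordM (lmM (xt *: f)) (lmM p), (q -> p = 0) & redp (xt *: f + p) (xt *: h')].
  move=> q h' Hq r; have [f0|fnz] := eqVneq f 0.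
    have h0 := (redp_dec r).1 f0; exists 0; split; [by left|by []|].
    by rewrite f0 h0 scaler0 addr0; apply: redplus_one; left.
  have [[g k] E] := lm_some fnz.
  have [p [s1 q1 r1]] := redp_xt Hq theta r E.
  exists p; split=> //; right; rewrite /xt (lm_xt theta E); exact/gtO_char.
split; first by move=> r; have [p [h1 _ h3]] := G1 false nq r; exists p.
split; first by move=> hq r; have [p [_ h2 h3]] := G1 true (fun _ => hq) r;
  move: h3; rewrite (h2 isT) addr0.
split; first by move=> r p hp; apply: part2.
split; first by move=> r; have [p [h1 _ h3]] := G3 false h nq r; exists p.
split; first by move=> hq r; have [p [_ h2 h3]] := G3 true h (fun _ => hq) r;
  move: h3; rewrite (h2 isT) addr0.
split; first by move=> r; have [p [h1 _ h3]] := G3 false 0 nq r; exists p; rewrite // -(scaler0 _ xt).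
move=> hq r; have [p [_ h2 h3]] := G3 true 0 (fun _ => hq) r.
by move: h3; rewrite (h2 isT) addr0 scaler0.
Qed.
End Main.

Theorem proposition22
  (R A : nzRingType) (iota : {rmorphism R -> A}) (n : nat) (x : 'I_n -> A)
  (coef : A -> exps n -> R) (supp : A -> seq (exps n))
  (ordA : rel (exps n)) (m : nat) (ordM : rel (exps n * 'I_m))
  (HPBW : sigma_PBW iota x coef supp)
  (HnoethR : left_noetherian R)
  (HordA : monomial_order_A x supp ordA)
  (HordM : monomial_order_Am x supp ordA ordM)
  (Hcab : forall a b : exps n, two_sided_unit (cab x coef a b))
  (F : seq 'cV[A]_m) (HF : forall g, g \in F -> g != 0)
  (f h : 'cV[A]_m) (theta : exps n) :
  let xt := xmon x theta in
  let red := red1 iota x coef supp ordM F in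
  let redp := redplus iota x coef supp ordM F in
  let lmM := lm supp ordM in
  (* (i) *)
  (red f h ->
     exists2 p : 'cV[A]_m, p = 0 \/ gtO ordM (lmM (xt *: f)) (lmM p)
                         & red (xt *: f + p) (xt *: h))
  /\ (quasi_commutative iota x -> red f h -> red (xt *: f) (xt *: h))
  (* (ii) *)
  /\ (redp f h -> forall p : 'cV[A]_m, p = 0 \/ gtO ordM (lmM h) (lmM p) ->
        redp (f + p) (h + p))
  (* (iii) *)
  /\ (redp f h ->
     exists2 p : 'cV[A]_m, p = 0 \/ gtO ordM (lmM (xt *: f)) (lmM p)
                         & redp (xt *: f + p) (xt *: h))
  /\ (quasi_commutative iota x -> redp f h -> redp (xt *: f) (xt *: h))
  (* (iv) *)
  /\ (redp f 0 ->
     exists2 p : 'cV[A]_m, p = 0 \/ gtO ordM (lmM (xt *: f)) (lmM p)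
                         & redp (xt *: f + p) 0)
  /\ (quasi_commutative iota x -> redp f 0 -> redp (xt *: f) 0).
Proof.
exact: (main_lemma HPBW HordA HordM Hcab F f h theta).
Qed.
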